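(* Let $X$ be a finite simplicial complex and $d\ge 0$. Put $r_d=\dim(\operatorname{im}(B_d^\intercal))$, $r_{d+1}=\dim(\operatorname{im}(B_{d+1}))$ and $n_d=\dim(C_d(X))$. Consider vector fields on $C_d(X)$ of the form $$\theta\mapsto B_d^\intercal F^{\downarrow}(B_d\theta)+B_{d+1}F^{\uparrow}(B_{d+1}^\intercal\theta),\qquad (\ast)$$ where $F^{\downarrow}:C_{d-1}(X)\to C_{d-1}(X)$ and $F^{\uparrow}:C_{d+1}(X)\to C_{d+1}(X)$ are arbitrary (nonlinear) maps. The conjugacy classes of all systems of the form $(\ast)$ are exactly the $(r_d,r_{d+1},n_d)$-vector fields. More specifically, every vector field of the form $(\ast)$ is conjugate to an $(r_d,r_{d+1},n_d)$-vector field; conversely, any $(r_d,r_{d+1},n_d)$-vector field is conjugate to a vector field of the form $(\ast)$ for some choice of $F^{\downarrow},F^{\uparrow}$.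
   Context: A finite simplicial complex $X$ on vertex set $\{1,\dots,n\}$ is a collection of nonempty subsets of $\{1,\dots,n\}$ closed under taking nonempty subsets; $X_d$ is the set of its simplices with $d+1$ elements. A $d$-simplex with vertices $i_0<\dots<i_d$ is written $[i_0,\dots,i_d]$. $C_d(X)$ is the real vector space with basis $X_d$ and the inner product making $X_d$ orthonormal ($C_d(X)=0$ if $X_d=\emptyset$; in particular $C_{-1}(X)=0$). The boundary map $\partial_d:C_d(X)\to C_{d-1}(X)$ is $\partial_d[i_0,\dots,i_d]=\sum_{k=0}^d(-1)^k[i_0,\dots,\widehat{i_k},\dots,i_d]$ (vertex $i_k$ omitted), and $B_d$ is its matrix with respect to fixed orderings of the bases $X_d$, $X_{d-1}$; $B_d^\intercal$ is its transpose. A map $H:\mathbb{R}^n\to\mathbb{R}^n$ is an $(\alpha,\beta,n)$-vector field ($\alpha+\beta\le n$) if there exist $H_1:\mathbb{R}^\alpha\to\mathbb{R}^\alpha$ and $H_2:\mathbb{R}^\beta\to\mathbb{R}^\beta$ with $H=H_1\oplus H_2\oplus H_3$ with respect to $\mathbb{R}^n=\mathbb{R}^\alpha\oplus\mathbb{R}^\beta\oplus\mathbb{R}^{n-\alpha-\beta}$, where $H_3$ is the zero map on $\mathbb{R}^{n-\alpha-\beta}$. Two vector fields $G$ on $U$ and $H$ on $V$ are conjugate if there is an invertible linear map $M:U\to V$ with $G(x)=M^{-1}H(Mx)$ for all $x$. *)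

(* Defs.v *)
From HB Require Import structures.
From mathcomp Require Import all_boot all_order all_algebra.
From mathcomp Require Import reals.
Set Implicit Arguments. Unset Strict Implicit. Unset Printing Implicit Defensive.
Import Order.TTheory GRing.Theory Num.Theory.
Local Open Scope ring_scope.

(* Vertices 1..n are represented by 'I_n (i.e. 0..n-1, same order). *)

Definition is_complex (n : nat) (X : {set {set 'I_n}}) : Prop :=
  (forall s, s \in X -> s != set0) /\
  (forall s t : {set 'I_n}, s \in X -> t \subset s -> t != set0 -> t \in X).

(* simplices with exactly k vertices; X_d = simp X d.+1 *)
Definition simp (n : nat) (X : {set {set 'I_n}}) (k : nat) : {set {set 'I_n}} :=
  [set s in X | #|s| == k].

(* coefficient of tau in the boundary of sigma:
   (-1)^k if tau = sigma minus its k-th vertex (0-based, increasing order) *)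
Definition bnd_coef (R : realType) (n : nat) (tau sigma : {set 'I_n}) : R :=
  \sum_(v in sigma | tau == sigma :\ v)
     (-1) ^+ #|[set u in sigma | (u < v)%N]|.

(* B_d = bmat X d : matrix of d-boundary, rows indexed by X_{d-1}
   (sets of size d), columns by X_d (sets of size d+1), orderings by enum. *)
Definition bmat (R : realType) (n : nat) (X : {set {set 'I_n}}) (d : nat)
  : 'M[R]_(#|simp X d|, #|simp X d.+1|) :=
  \matrix_(i, j) bnd_coef R (enum_val i) (enum_val j).

Definition star_field (R : realType) (n : nat) (X : {set {set 'I_n}}) (d : nat)
  (Fdown : 'cV[R]_(#|simp X d|) -> 'cV[R]_(#|simp X d|))
  (Fup : 'cV[R]_(#|simp X d.+2|) -> 'cV[R]_(#|simp X d.+2|))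
  (theta : 'cV[R]_(#|simp X d.+1|)) : 'cV[R]_(#|simp X d.+1|) :=
  (bmat R X d)^T *m Fdown (bmat R X d *m theta)
  + bmat R X d.+1 *m Fup ((bmat R X d.+1)^T *m theta).

(* j-th coordinate (0-based) of x, or 0 if out of range *)
Definition coord (R : realType) (m : nat) (x : 'cV[R]_m) (j : nat) : R :=
  \sum_(i < m | val i == j) x i 0.

(* (a,b,m)-vector field: H = H1 (+) H2 (+) 0 w.r.t. R^a (+) R^b (+) R^(m-a-b) *)
Definition abn_field (R : realType) (a b m : nat)
  (H : 'cV[R]_m -> 'cV[R]_m) : Prop :=
  (a + b <= m)%N /\
  exists (H1 : 'cV[R]_a -> 'cV[R]_a) (H2 : 'cV[R]_b -> 'cV[R]_b),
    forall (x : 'cV[R]_m) (i : 'I_m),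
      H x i 0 =
        if (i < a)%N then coord (H1 (\col_(j < a) coord x j)) i
        else if (i < a + b)%N then
          coord (H2 (\col_(j < b) coord x (a + j))) (i - a)
        else 0.

Definition conjugate (R : realType) (m : nat)
  (G H : 'cV[R]_m -> 'cV[R]_m) : Prop :=
  exists M : 'M[R]_m, M \in unitmx /\
    forall x, G x = invmx M *m H (M *m x).

(* Main.v *)
Require Import Defs.
From HB Require Import structures.
From mathcomp Require Import all_boot all_order all_algebra.
From mathcomp Require Import reals.
From mathcomp Require Import zify.
Import Order.TTheory GRing.Theory Num.Theory.
Local Open Scope ring_scope.

Module Helpers.
Set Implicit Arguments. Unset Strict Implicit. Unset Printing Implicit Defensive.


Section Emb.
Variable R : realFieldType.

Definition emb (m p off : nat) : 'M[R]_(m, p) :=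
  \matrix_(i, j) ((i : nat) == off + j)%:R.

Lemma sum_eqnat m t (g : nat -> R) :
  \sum_(i < m) ((i : nat) == t)%:R * g i = (t < m)%:R * g t.
Proof.
case: (ltnP t m) => h.
  rewrite (bigD1 (Ordinal h)) //= eqxx mul1r big1 ?addr0 ?mul1r // => i ne.
  rewrite (_ : ((i : nat) == t) = false) ?mul0r //; apply/negbTE.
  by apply: contra ne => /eqP e; apply/eqP/val_inj.
rewrite mul0r big1 // => i _.
rewrite (_ : ((i : nat) == t) = false) ?mul0r //; apply/negbTE.
by rewrite neq_ltn (leq_trans (ltn_ord i) h).
Qed.

Lemma sum_eqoff p (o i : nat) (g : nat -> R) :
  \sum_(k < p) (i == o + k)%:R * g k = ((o <= i) && (i - o < p))%N%:R * g (i - o)%N.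
Proof.
case: (leqP o i) => h /=.
  rewrite -sum_eqnat; apply: eq_bigr => k _.
  by rewrite -{1}(subnKC h) eqn_add2l eq_sym.
rewrite mul0r big1 // => k _.
rewrite (_ : (i == o + k) = false) ?mul0r //; apply/negbTE.
by rewrite neq_ltn ltn_addr.
Qed.

Lemma embTemb m p q o1 o2 :
  (emb m p o1)^T *m emb m q o2 =
  \matrix_(j, k) ((o1 + j < m)%N && (o1 + j == o2 + k))%:R.
Proof.
apply/matrixP => j k; rewrite !mxE.
rewrite (eq_bigr (fun i : 'I_m => ((i : nat) == (o1 + j)%N)%:R * ((i : nat) == (o2 + k)%N)%:R :> R));
  last by move=> i _; rewrite !mxE.
by rewrite (sum_eqnat m (o1 + j) (fun i => (i == (o2 + k)%N)%:R)) -natrM mulnb.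
Qed.

Lemma embTemb1 m p o : (o + p <= m)%N -> (emb m p o)^T *m emb m p o = 1%:M.
Proof.
move=> h; rewrite embTemb; apply/matrixP => j k; rewrite !mxE eqn_add2l.
by rewrite (leq_trans _ h) // ltn_add2l.
Qed.

Lemma embTemb0 m p q o1 o2 : (o1 + p <= o2)%N -> (emb m p o1)^T *m emb m q o2 = 0.
Proof.
move=> h; rewrite embTemb; apply/matrixP => j k; rewrite !mxE.
rewrite (_ : (o1 + j == o2 + k) = false) ?andbF //; apply/negbTE.
by rewrite neq_ltn (leq_trans _ (leq_addr _ _)) // (leq_trans _ h) // ltn_add2l.
Qed.

Lemma embTemb0' m p q o1 o2 : (o1 + p <= o2)%N -> (emb m q o2)^T *m emb m p o1 = 0.
Proof.
by move=> h; rewrite -[LHS]trmxK trmx_mul trmxK embTemb0 // trmx0.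
Qed.

Lemma embembT m p o : emb m p o *m (emb m p o)^T =
  \matrix_(i, j) (((o <= i) && (i - o < p))%N && (j == i :> nat))%:R.
Proof.
apply/matrixP => i j; rewrite !mxE.
rewrite (eq_bigr (fun k : 'I_p => ((i : nat) == (o + k)%N)%:R * ((j : nat) == (o + k)%N)%:R :> R));
  last by move=> k _; rewrite !mxE.
rewrite (sum_eqoff p o i (fun k => ((j : nat) == (o + k)%N)%:R)) -natrM mulnb.
by case: (leqP o i) => h //=; rewrite subnKC.
Qed.

Lemma emb_sum a b c m : (a + b + c = m)%N ->
  emb m a 0 *m (emb m a 0)^T + emb m b a *m (emb m b a)^T
  + emb m c (a + b) *m (emb m c (a + b))^T = 1%:M.
Proof.
move=> h; rewrite !embembT; apply/matrixP => i j; rewrite !mxE.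
rewrite -!natrD; congr (_%:R); rewrite -(inj_eq val_inj) /=.
case: (eqVneq (j : nat) i) => _; rewrite ?andbF ?andbT // subn0.
have hi : (i < a + b + c)%N by rewrite h.
case: (ltnP i a) => h1 /=.
  by rewrite leqNgt (ltn_addr _ h1).
rewrite ltn_subLR //.
case: (ltnP i (a + b)) => h2 /=; first by [].
by rewrite ltn_subLR // hi.
Qed.

Lemma rv_norm0 m (v : 'rV[R]_m) : v *m v^T = 0 -> v = 0.
Proof.
move/matrixP/(_ 0 0); rewrite !mxE => h.
apply/rowP => j; rewrite mxE.
have hs : \sum_(k < m) v 0 k ^+ 2 = 0.
  by rewrite -[RHS]h; apply: eq_bigr => k _; rewrite mxE expr2.
have := psumr_eq0P (fun k _ => sqr_ge0 (v 0 k)) hs (i := j) isT.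
by move/eqP; rewrite sqrf_eq0 => /eqP.
Qed.

Lemma gram_unit p m (A : 'M[R]_(p, m)) : row_free A -> A *m A^T \in unitmx.
Proof.
move=> fA; rewrite -row_free_unit -kermx_eq0; apply/rowV0P => v.
rewrite sub_kermx => /eqP h.
have : (v *m A) *m (v *m A)^T = 0 by rewrite trmx_mul !mulmxA -(mulmxA v) h mul0mx.
move/rv_norm0 => h2; apply: (row_free_inj fA); by rewrite h2 mul0mx.
Qed.

Lemma cap_orth p q m (A : 'M[R]_(p, m)) (B : 'M[R]_(q, m)) :
  A *m B^T = 0 -> (A :&: B)%MS = 0.
Proof.
move=> hAB; apply/eqP/rowV0P => v hv.
have /submxP [x hx] := submx_trans hv (capmxSl A B).
have /submxP [y hy] := submx_trans hv (capmxSr A B).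
apply: rv_norm0.
have -> : v *m v^T = (x *m A) *m (y *m B)^T by rewrite -hx -hy.
by rewrite trmx_mul !mulmxA -(mulmxA x) hAB mulmx0 !mul0mx.
Qed.

End Emb.

Section Core.
Variables (R : realType) (m0 m m2 : nat) (D : 'M[R]_(m0, m)) (U : 'M[R]_(m, m2)).
Hypothesis hDU : D *m U = 0.

Local Notation a := (\rank D^T).
Local Notation b := (\rank U).
Local Notation E1 := (emb R m a 0).
Local Notation E2 := (emb R m b a).

Lemma rankC : \rank (row_mx D^T U) = (a + b)%N.
Proof.
rewrite -mxrank_tr tr_row_mx trmxK.
have -> : \rank (col_mx D U^T) = \rank (D + U^T)%MS by rewrite addsmxE.
have := mxrank_sum_cap D U^T.
rewrite cap_orth ?mxrank0 ?addn0 ?mxrank_tr //.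
by rewrite trmxK.
Qed.

Lemma exists_P : exists (P : 'M[R]_m) (K1 : 'M[R]_(a, m0)) (K2 : 'M[R]_(b, m2))
   (W1 : 'M[R]_(m0, a)) (W2 : 'M[R]_(m2, b)) (L1 : 'M[R]_(a, m0)) (L2 : 'M[R]_(b, m2)),
  P \in unitmx /\ (a + b <= m)%N /\
  D^T = P *m E1 *m K1 /\ U = P *m E2 *m K2 /\
  D *m P = D *m P *m E1 *m E1^T /\ U^T *m P = U^T *m P *m E2 *m E2^T /\
  K1 *m W1 = 1%:M /\ K2 *m W2 = 1%:M /\
  L1 *m (D *m P *m E1) = 1%:M /\ L2 *m (U^T *m P *m E2) = 1%:M.
Proof.
have base p q (A : 'M[R]_(p, q)) : exists (P1 : 'M_(p, \rank A)) (K1 : 'M_(\rank A, q)),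
    P1 *m K1 = A /\ row_free K1 /\ row_free P1^T.
  exists (col_base A), (row_base A); split; first exact: mulmx_base.
  split; first exact: row_base_free.
  by rewrite /row_free mxrank_tr; exact: col_base_full.
have [P1 [K1 [hPK1 [fK1 F1]]]] := base _ _ D^T.
have [P2 [K2 [hPK2 [fK2 F2]]]] := base _ _ U.
have [W1 hW1] := row_freeP fK1.
have [W2 hW2] := row_freeP fK2.
have hP1 : P1 = D^T *m W1 by rewrite -[LHS]mulmx1 -hW1 mulmxA hPK1.
have hP2 : P2 = U *m W2 by rewrite -[LHS]mulmx1 -hW2 mulmxA hPK2.
set C := row_mx D^T U.
set c := \rank (kermx C).
have [N [hNC F3]] : exists N : 'M_(c, m), N *m C = 0 /\ row_free N.
  exists (row_base (kermx C)); split; last exact: row_base_free.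
  by apply/eqP; rewrite -sub_kermx eq_row_base submx_refl.
set P3 := N^T.
have [hND hNU] : N *m D^T = 0 /\ N *m U = 0.
  by move: hNC; rewrite mul_mx_row => /eqP; rewrite row_mx_eq0 => /andP [/eqP -> /eqP ->].
have DP3 : D *m P3 = 0 by rewrite -[D]trmxK -trmx_mul hND trmx0.
have UP3 : U^T *m P3 = 0 by rewrite -trmx_mul hNU trmx0.
have DP2 : D *m P2 = 0 by rewrite hP2 mulmxA hDU mul0mx.
have UP1 : U^T *m P1 = 0 by rewrite hP1 mulmxA -trmx_mul hDU trmx0 mul0mx.
have O12 : P1^T *m P2 = 0 by rewrite hP1 trmx_mul trmxK -mulmxA DP2 mulmx0.
have O13 : P1^T *m P3 = 0 by rewrite hP1 trmx_mul trmxK -mulmxA DP3 mulmx0.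
have O23 : P2^T *m P3 = 0 by rewrite hP2 trmx_mul -mulmxA UP3 mulmx0.
have O21 : P2^T *m P1 = 0 by rewrite -[LHS]trmxK trmx_mul trmxK O12 trmx0.
have O31 : P3^T *m P1 = 0 by rewrite -[LHS]trmxK trmx_mul trmxK O13 trmx0.
have O32 : P3^T *m P2 = 0 by rewrite -[LHS]trmxK trmx_mul trmxK O23 trmx0.
have hab : (a + b <= m)%N by rewrite -rankC rank_leq_row.
have hc : c = (m - (a + b))%N by rewrite /c mxrank_ker rankC.
have habc : (a + b + c = m)%N by rewrite hc subnKC.
have G1 := gram_unit F1; have G2 := gram_unit F2.
rewrite trmxK in G1; rewrite trmxK in G2.
have G3 : P3^T *m P3 \in unitmx by rewrite /P3 trmxK; exact: gram_unit.
set E3 := emb R m c (a + b).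
have e11 : E1^T *m E1 = 1%:M by apply: embTemb1; rewrite add0n (leq_trans _ hab) ?leq_addr.
have e22 : E2^T *m E2 = 1%:M by apply: embTemb1.
have e33 : E3^T *m E3 = 1%:M by apply: embTemb1; rewrite habc.
have e12 : E1^T *m E2 = 0 by apply: embTemb0; rewrite add0n.
have e21 : E2^T *m E1 = 0 by apply: embTemb0'; rewrite add0n.
have e13 : E1^T *m E3 = 0 by apply: embTemb0; rewrite add0n leq_addr.
have e31 : E3^T *m E1 = 0 by apply: embTemb0'; rewrite add0n leq_addr.
have e23 : E2^T *m E3 = 0 by apply: embTemb0.
have e32 : E3^T *m E2 = 0 by apply: embTemb0'.
set P := P1 *m E1^T + P2 *m E2^T + P3 *m E3^T.
have PE1 : P *m E1 = P1.
  by rewrite !mulmxDl -!mulmxA e11 e21 e31 !mulmx0 !addr0 mulmx1.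
have PE2 : P *m E2 = P2.
  by rewrite !mulmxDl -!mulmxA e12 e22 e32 !mulmx0 add0r addr0 mulmx1.
have DP : D *m P = D *m P1 *m E1^T.
  by rewrite !mulmxDr !mulmxA DP2 DP3 !mul0mx !addr0.
have UP : U^T *m P = U^T *m P2 *m E2^T.
  by rewrite !mulmxDr !mulmxA UP1 UP3 !mul0mx addr0 add0r.
have hD : D = K1^T *m P1^T by rewrite -trmx_mul hPK1 trmxK.
have hU : U^T = K2^T *m P2^T by rewrite -trmx_mul hPK2.
have P1P : P1^T *m P = P1^T *m P1 *m E1^T.
  by rewrite !mulmxDr !mulmxA O12 O13 !mul0mx !addr0.
have P2P : P2^T *m P = P2^T *m P2 *m E2^T.
  by rewrite !mulmxDr !mulmxA O21 O23 !mul0mx addr0 add0r.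
have P3P : P3^T *m P = P3^T *m P3 *m E3^T.
  by rewrite !mulmxDr !mulmxA O31 O32 !mul0mx !add0r.
have Punit : P \in unitmx.
  pose Q := E1 *m invmx (P1^T *m P1) *m P1^T + E2 *m invmx (P2^T *m P2) *m P2^T
          + E3 *m invmx (P3^T *m P3) *m P3^T.
  have : Q *m P = 1%:M.
    have iK k l (G : 'M[R]_k) (X : 'M[R]_(k, l)) : G \in unitmx -> invmx G *m (G *m X) = X.
      by move=> u; rewrite mulmxA mulVmx // mul1mx.
    rewrite !mulmxDl -!mulmxA P1P P2P P3P !iK //.
    exact: emb_sum.
  by case/mulmx1_unit.
exists P, K1, K2, W1, W2, (invmx (P1^T *m P1) *m W1^T), (invmx (P2^T *m P2) *m W2^T).
have DP1 : D *m P1 = K1^T *m (P1^T *m P1) by rewrite mulmxA -hD.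
have UP2 : U^T *m P2 = K2^T *m (P2^T *m P2) by rewrite mulmxA -hU.
do ![split] => //.
- by rewrite PE1 hPK1.
- by rewrite PE2 hPK2.
- by rewrite -(mulmxA D P) PE1 DP.
- by rewrite -(mulmxA _ P) PE2 UP.
- rewrite -(mulmxA D P) PE1 DP1 -!mulmxA (mulmxA W1^T) -trmx_mul hW1 trmx1 mul1mx.
  by rewrite mulVmx.
- rewrite -(mulmxA _ P) PE2 UP2 -!mulmxA (mulmxA W2^T) -trmx_mul hW2 trmx1 mul1mx.
  by rewrite mulVmx.
Qed.

End Core.


Section Comb.
Variables (R : realType) (n : nat).
Implicit Types (rho sig tau : {set 'I_n}) (v w : 'I_n).

Definition sgn sig v : R := (-1) ^+ #|[set u in sig | (u < v)%N]|.

Lemma sgnD1 rho v w : v \in rho -> w != v ->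
  sgn (rho :\ v) w = sgn rho w * (-1) ^+ (v < w)%N.
Proof.
move=> vr wv; rewrite /sgn (cardsD1 v [set u in rho | (u < w)%N]) inE vr /=.
have -> : [set u in rho | (u < w)%N] :\ v = [set u in rho :\ v | (u < w)%N].
  by apply/setP=> u; rewrite !inE andbA.
by rewrite exprD mulrC mulrA -exprD addnn -mul2n exprM sqrrN !expr1n mul1r.
Qed.

Lemma dd0_entry tau rho (S : {set {set 'I_n}}) :
  (forall v, v \in rho -> rho :\ v \in S) ->
  \sum_(sig in S) bnd_coef R tau sig * bnd_coef R sig rho = 0.
Proof.
move=> hS.
have step1 : \sum_(sig in S) bnd_coef R tau sig * bnd_coef R sig rho =
   \sum_(v in rho) bnd_coef R tau (rho :\ v) * sgn rho v.
  rewrite (eq_bigr (fun sig => \sum_(v in rho)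
     (if sig == rho :\ v then bnd_coef R tau sig * sgn rho v else 0))); last first.
    move=> sig _; rewrite /bnd_coef mulr_sumr big_mkcondr /=.
    by apply: eq_bigr => v _; rewrite eq_sym; case: ifP.
  rewrite exchange_big /=; apply: eq_bigr => v vr.
  rewrite -big_mkcondr /= (big_pred1 (rho :\ v)) //.
  by move=> sig /=; apply/andP/eqP => [[] _ /eqP|->]; [|split; [apply: hS|]].
rewrite step1.
pose F v w : R := if (w != v) && (tau == rho :\ v :\ w)
   then sgn rho w * sgn rho v * (-1) ^+ (v < w)%N else 0.
have step2 : \sum_(v in rho) bnd_coef R tau (rho :\ v) * sgn rho v =
   \sum_(v in rho) \sum_(w in rho) F v w.
  apply: eq_bigr => v vr; rewrite /bnd_coef mulr_suml big_mkcond /=.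
  rewrite [RHS]big_mkcond /=.
  apply: eq_bigr => w _; rewrite /F !inE.
  case: (w =P v) => [->|/eqP wv] //=; first by case: ifP.
  case wr: (w \in rho); case: (tau == _) => //=.
  by rewrite -/(sgn (rho :\ v) w) sgnD1 // mulrAC.
rewrite step2.
have anti v w : F w v = - F v w.
  rewrite /F eq_sym setDDl setUC -setDDl.
  case: (v =P w) => [->|/eqP wv]; first by rewrite eqxx oppr0.
  rewrite (eq_sym w v) wv /=; case: (tau == _); last by rewrite oppr0.
  rewrite [sgn rho v * _]mulrC.
  case: (ltngtP v w) => h; rewrite ?expr0 ?expr1 ?mulrN1 ?mulr1 ?opprK //.
  by move: wv; rewrite eq_sym (_ : v = w) ?eqxx //; apply: val_inj.
set S0 := \sum_(v in rho) _.
have : S0 = - S0.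
  rewrite {1}/S0 exchange_big /= -sumrN; apply: eq_bigr => v _.
  by rewrite -sumrN; apply: eq_bigr => w _; rewrite anti.
move/eqP; rewrite -subr_eq0 opprK -mulr2n mulrn_eq0 /= => /eqP //.
Qed.

End Comb.

Lemma dd0 (R : realType) n (X : {set {set 'I_n}}) (hX : is_complex X) d :
  bmat R X d *m bmat R X d.+1 = 0.
Proof.
apply/matrixP => i k; rewrite !mxE.
rewrite (eq_bigr (fun j => bnd_coef R (enum_val i) (enum_val j) *
                           bnd_coef R (enum_val j) (enum_val k))); last first.
  by move=> j _; rewrite !mxE.
rewrite -(big_enum_val (fun s => bnd_coef R (enum_val i) s * bnd_coef R s (enum_val k))) /=.
apply: dd0_entry => v vr.
have := enum_valP k; rewrite !inE => /andP [rX /eqP cr].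
have cd : #|enum_val k :\ v| = d.+1.
  by move: cr; rewrite (cardsD1 v) vr => -[].
rewrite cd eqxx andbT.
apply: (hX.2 _ _ rX); first exact: subsetDl.
by apply/eqP => e; move: cd; rewrite e cards0.
Qed.


Section Abn.
Variable R : realType.

Lemma coord_out p (v : 'cV[R]_p) k : (p <= k)%N -> Defs.coord v k = 0.
Proof.
move=> h; apply: big1 => j /eqP e.
by move: (ltn_ord j); rewrite e ltnNge h.
Qed.

Lemma L_col m p o (x : 'cV[R]_m) :
  \col_(j < p) Defs.coord x (o + j)%N = (emb R m p o)^T *m x.
Proof.
apply/colP => j; rewrite !mxE /Defs.coord big_mkcond /=.
apply: eq_bigr => i _; rewrite !mxE.
by case: eqP => _; rewrite ?mul1r ?mul0r.
Qed.

Lemma L_col0 m p (x : 'cV[R]_m) :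
  \col_(j < p) Defs.coord x j = (emb R m p 0)^T *m x.
Proof. by rewrite -L_col; apply/colP => j; rewrite !mxE. Qed.

Lemma L_emb m p o (v : 'cV[R]_p) (i : 'I_m) :
  (emb R m p o *m v) i 0 = if (o <= i)%N then Defs.coord v (i - o) else 0.
Proof.
rewrite !mxE /Defs.coord.
case: (leqP o i) => h.
  rewrite [RHS]big_mkcond /=; apply: eq_bigr => j _; rewrite !mxE -{1}(subnKC h) eqn_add2l eq_sym.
  by case: eqP => _; rewrite ?mul1r ?mul0r.
apply: big1 => j _; rewrite !mxE.
rewrite (_ : ((i : nat) == (o + j)%N) = false) ?mul0r //; apply/negbTE.
by rewrite neq_ltn ltn_addr.
Qed.

Lemma abn_entry a b (v1 : 'cV[R]_a) (v2 : 'cV[R]_b) (i : nat) :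
  Defs.coord v1 i + (if (a <= i)%N then Defs.coord v2 (i - a) else 0) =
  if (i < a)%N then Defs.coord v1 i else if (i < a + b)%N then Defs.coord v2 (i - a) else 0.
Proof.
case: (ltnP i a) => h1; first by rewrite addr0.
rewrite (coord_out v1 h1) add0r; case: ltnP => h2 //.
by rewrite coord_out // leq_subRL.
Qed.

Lemma abn_of a b m (H : 'cV[R]_m -> 'cV[R]_m) H1 H2 : (a + b <= m)%N ->
  (forall x, H x = emb R m a 0 *m H1 ((emb R m a 0)^T *m x)
                 + emb R m b a *m H2 ((emb R m b a)^T *m x)) ->
  abn_field a b H.
Proof.
move=> hab hH; split => //; exists H1, H2 => x i.
by rewrite hH mxE !L_emb subn0 -L_col0 -L_col abn_entry.
Qed.

Lemma to_abn a b m (H : 'cV[R]_m -> 'cV[R]_m) : abn_field a b H ->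
  exists H1 H2, forall x, H x = emb R m a 0 *m H1 ((emb R m a 0)^T *m x)
                 + emb R m b a *m H2 ((emb R m b a)^T *m x).
Proof.
case=> hab [H1 [H2 hH]]; exists H1, H2 => x; apply/colP => i.
by rewrite hH mxE !L_emb subn0 -L_col0 -L_col abn_entry.
Qed.

End Abn.

End Helpers.
Import Helpers.

Theorem mainTheorem1 (R : realType) (n : nat) (X : {set {set 'I_n}})
  (hX : is_complex X) (d : nat) :
  (forall (Fdown : 'cV[R]_(#|simp X d|) -> 'cV[R]_(#|simp X d|))
          (Fup : 'cV[R]_(#|simp X d.+2|) -> 'cV[R]_(#|simp X d.+2|)),
     exists H : 'cV[R]_(#|simp X d.+1|) -> 'cV[R]_(#|simp X d.+1|),
       abn_field (\rank (bmat R X d)^T) (\rank (bmat R X d.+1)) H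
       /\ conjugate (star_field Fdown Fup) H)
  /\
  (forall H : 'cV[R]_(#|simp X d.+1|) -> 'cV[R]_(#|simp X d.+1|),
     abn_field (\rank (bmat R X d)^T) (\rank (bmat R X d.+1)) H ->
     exists (Fdown : 'cV[R]_(#|simp X d|) -> 'cV[R]_(#|simp X d|))
            (Fup : 'cV[R]_(#|simp X d.+2|) -> 'cV[R]_(#|simp X d.+2|)),
       conjugate H (star_field Fdown Fup)).
Proof.
have hDU := dd0 R hX d.
rewrite /star_field.
set D := bmat R X d in hDU *; set U := bmat R X d.+1 in hDU *.
have [P [K1 [K2 [W1 [W2 [L1 [L2 [Pu [hab [hD [hU [hDP [hUP [hKW1 [hKW2 [hL1 hL2]]]]]]]]]]]]]]]]
  := exists_P hDU.
set E1 := emb R _ _ 0 in hD hDP hL1 *.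
set E2 := emb R _ _ (\rank D^T) in hU hUP hL2 *.
have hDw w : D^T *m w = P *m (E1 *m (K1 *m w)) by rewrite !mulmxA -hD.
have hUw w : U *m w = P *m (E2 *m (K2 *m w)) by rewrite !mulmxA -hU.
have hDx x : D *m (P *m x) = D *m P *m E1 *m (E1^T *m x).
  by rewrite mulmxA {1}hDP -!mulmxA.
have hUx x : U^T *m (P *m x) = U^T *m P *m E2 *m (E2^T *m x).
  by rewrite mulmxA {1}hUP -!mulmxA.
split.
- move=> Fd Fu.
  exists (fun y => invmx P *m (D^T *m Fd (D *m (P *m y)) + U *m Fu (U^T *m (P *m y)))).
  split.
    apply: (@abn_of _ _ _ _ _ (fun z => K1 *m Fd (D *m P *m E1 *m z))
                                (fun z => K2 *m Fu (U^T *m P *m E2 *m z))) => // y.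
    by rewrite hDx hUx hDw hUw -mulmxDr mulmxA mulVmx // mul1mx.
  exists (invmx P); split; first by rewrite unitmx_inv.
  by move=> x; rewrite invmxK !(mulmxA P (invmx P)) mulmxV // !mul1mx.
- move=> H /to_abn [H1 [H2 hH]].
  exists (fun z => W1 *m H1 (L1 *m z)), (fun z => W2 *m H2 (L2 *m z)).
  exists P; split => // x.
  rewrite hDx hUx (mulmxA L1 (D *m P *m E1)) (mulmxA L2 (U^T *m P *m E2)) hL1 hL2 !mul1mx hDw hUw.
  by rewrite (mulmxA K1 W1) (mulmxA K2 W2) hKW1 hKW2 !mul1mx -mulmxDr (mulmxA (invmx P) P) mulVmx // mul1mx.
Qed.
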